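(* Let $G=(V\cup C,E)$ be a protograph in which every variable node has degree at least $2$, and assume that (1) the degree-2 subgraph $G_2$ contains no cycle, and (2) every degree-2 variable node is joined by a path in $G$ to a variable node of degree at least $3$. Let $\epsilon_{\mathrm{th}}$ be the BEC density evolution threshold of $G$. Then for every $\epsilon$ with $0\le\epsilon<\epsilon_{\mathrm{th}}$ there exist positive constants $\alpha,\beta,K$ and an integer $t_0$ such that $$x_t(i)\le K\exp\!\left(-\beta\, 2^{\alpha t}\right)\qquad\text{for all } 1\le i\le |E| \text{ and all } t\ge t_0 .$$
   Context: A protograph is a finite bipartite multigraph $G=(V\cup C,E)$ with variable (bit) nodes $V$, check nodes $C$, and ordered edges $E=\{e_1,\dots,e_{|E|}\}$; parallel edges between a variable node and a check node are allowed. For an edge $e$, $v(e)$ and $c(e)$ denote its variable-node and check-node endpoints. The degree of a node is the number of incident edges counted with multiplicity. For an edge $e$, $E_c(e)=\{i: c(e_i)=c(e),\ e_i\neq e\}$ and $E_v(e)=\{i: v(e_i)=v(e),\ e_i\ne e\}$. The degree-2 subgraph $G_2$ of $G$ consists of all degree-2 variable nodes, all edges incident to them, and the check nodes incident to those edges; a cycle in $G_2$ may have length $2$ (two parallel edges between the same variable and check node). Protograph density evolution over the binary erasure channel BEC$(\epsilon)$, $\epsilon\in[0,1]$: $x_0(i)=\epsilon$ for all $i$, and for $t\ge 0$, $y_{t+1}(j)=1-\prod_{i\in E_c(e_j)}(1-x_t(i))$, $x_{t+1}(i)=\epsilon\prod_{j\in E_v(e_i)}y_{t+1}(j)$ (empty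 products equal $1$). The threshold is $\epsilon_{\mathrm{th}}=\sup\{\epsilon\in[0,1]: \max_i x_t(i)\to 0 \text{ as } t\to\infty\}$. *)

(* Defs.v *)
From Stdlib Require Import Reals Lra Lia Arith List Bool.
Import ListNotations.
Open Scope R_scope.

(* A protograph: variable nodes 0..nv-1, check nodes 0..nc-1, and an ordered
   list of edges; edge i (0 <= i < |E|) is the pair (v(e_i), c(e_i)).
   Parallel edges are allowed (repeated pairs). *)
Record protograph := {
  nvar : nat;
  nchk : nat;
  edges : list (nat * nat)
}.

Definition nedges (G : protograph) : nat := length (edges G).
Definition edge (G : protograph) (i : nat) : nat * nat := nth i (edges G) (0%nat, 0%nat).
Definition vof (G : protograph) (i : nat) : nat := fst (edge G i).
Definition cof (G : protograph) (i : nat) : nat := snd (edge G i).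

Definition well_formed (G : protograph) : Prop :=
  forall i, (i < nedges G)%nat -> (vof G i < nvar G)%nat /\ (cof G i < nchk G)%nat.

Definition var_deg (G : protograph) (v : nat) : nat :=
  length (filter (fun i => Nat.eqb (vof G i) v) (seq 0 (nedges G))).

Definition Ec (G : protograph) (j : nat) : list nat :=
  filter (fun i => andb (Nat.eqb (cof G i) (cof G j)) (negb (Nat.eqb i j))) (seq 0 (nedges G)).
Definition Ev (G : protograph) (j : nat) : list nat :=
  filter (fun i => andb (Nat.eqb (vof G i) (vof G j)) (negb (Nat.eqb i j))) (seq 0 (nedges G)).

Definition prodR (f : nat -> R) (l : list nat) : R :=
  fold_right (fun i acc => f i * acc) 1 l.

(* y_{t+1}(j) computed from x_t *)
Definition de_y (G : protograph) (xt : nat -> R) (j : nat) : R :=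
  1 - prodR (fun i => 1 - xt i) (Ec G j).

Fixpoint de_x (G : protograph) (eps : R) (t : nat) : nat -> R :=
  match t with
  | O => fun _ => eps
  | S t' => fun i => eps * prodR (de_y G (de_x G eps t')) (Ev G i)
  end.

Definition de_converges (G : protograph) (eps : R) : Prop :=
  0 <= eps <= 1 /\
  forall i, (i < nedges G)%nat -> Un_cv (fun t => de_x G eps t i) 0.

Definition is_threshold (G : protograph) (eth : R) : Prop :=
  is_lub (de_converges G) eth.

Inductive node := VN (v : nat) | CN (c : nat).

Definition connects (G : protograph) (i : nat) (u u' : node) : Prop :=
  (u = VN (vof G i) /\ u' = CN (cof G i)) \/ (u = CN (cof G i) /\ u' = VN (vof G i)).

(* A cycle: k >= 2 distinct edges e_0..e_{k-1} and k distinct vertices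
   u_0..u_{k-1} with e_j joining u_j and u_{(j+1) mod k}.  (k = 2 covers two
   parallel edges.)  It lies in G_2 iff all its edges are incident to
   degree-2 variable nodes. *)
Definition has_cycle_in_G2 (G : protograph) : Prop :=
  exists (k : nat) (es : list nat) (us : list node),
    (2 <= k)%nat /\ length es = k /\ length us = k /\ NoDup es /\ NoDup us /\
    (forall j, (j < k)%nat ->
       (nth j es 0 < nedges G)%nat /\
       var_deg G (vof G (nth j es 0%nat)) = 2%nat /\
       connects G (nth j es 0%nat) (nth j us (VN 0)) (nth ((j + 1) mod k) us (VN 0))).

Definition path_in_G (G : protograph) (a b : node) : Prop :=
  exists (k : nat) (es : list nat) (us : list node),
    length es = k /\ length us = S k /\ NoDup us /\
    nth 0 us (VN 0) = a /\ nth k us (VN 0) = b /\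
    (forall j, (j < k)%nat ->
       (nth j es 0 < nedges G)%nat /\
       connects G (nth j es 0%nat) (nth j us (VN 0)) (nth (S j) us (VN 0))).

(* Main.v *)
Require Import Defs.
From Stdlib Require Import Reals Lra Lia Arith List Bool Classical.
Import ListNotations.
Open Scope R_scope.

Lemma filter_split (p : nat -> bool) (i : nat) (l : list nat) :
  NoDup l -> In i l -> p i = true ->
  length (filter p l) = S (length (filter (fun k => p k && negb (Nat.eqb k i)) l)).
Proof.
  induction l as [|x l IH]; intros Hnd Hin Hp; [destruct Hin|].
  inversion Hnd as [|? ? Hx Hnd']; subst. simpl.
  destruct (Nat.eqb_spec x i) as [->|Hne].
  - rewrite Hp. simpl. f_equal. f_equal. apply filter_ext_in.
    intros y Hy. destruct (Nat.eqb_spec y i); subst; [contradiction|].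
    rewrite andb_true_r. reflexivity.
  - destruct Hin as [->|Hin]; [congruence|]. simpl.
    destruct (p x); simpl; rewrite IH; auto.
Qed.

Lemma In_Ev G i j : In j (Ev G i) <-> (j < nedges G /\ vof G j = vof G i /\ j <> i)%nat.
Proof.
  unfold Ev. rewrite filter_In, in_seq, andb_true_iff, negb_true_iff,
    Nat.eqb_eq, Nat.eqb_neq. lia.
Qed.

Lemma In_Ec G i j : In j (Ec G i) <-> (j < nedges G /\ cof G j = cof G i /\ j <> i)%nat.
Proof.
  unfold Ec. rewrite filter_In, in_seq, andb_true_iff, negb_true_iff,
    Nat.eqb_eq, Nat.eqb_neq. lia.
Qed.

Lemma Ev_len G i : (i < nedges G)%nat -> length (Ev G i) = (var_deg G (vof G i) - 1)%nat.
Proof.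
  intros Hi. unfold var_deg.
  rewrite (filter_split (fun k => Nat.eqb (vof G k) (vof G i)) i).
  - unfold Ev. simpl. lia.
  - apply seq_NoDup.
  - apply in_seq. lia.
  - apply Nat.eqb_refl.
Qed.

Lemma Ec_len G j : (length (Ec G j) <= nedges G)%nat.
Proof. unfold Ec. rewrite <- (length_seq (nedges G) 0) at 2. apply filter_length_le. Qed.


Definition sumR (f : nat -> R) (l : list nat) : R :=
  fold_right (fun i acc => f i + acc) 0 l.

Lemma prodR_01 f l : (forall i, In i l -> 0 <= f i <= 1) -> 0 <= prodR f l <= 1.
Proof.
  induction l as [|a l IH]; simpl; intros H; [lra|].
  destruct (H a (or_introl eq_refl)).
  destruct IH as [Q1 Q2]; [intros; apply H; auto|]. split; nra.
Qed.

Lemma prodR_le f g l : (forall i, In i l -> 0 <= f i <= g i) -> prodR f l <= prodR g l.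
Proof.
  induction l as [|a l IH]; simpl; intros H; [lra|].
  destruct (H a (or_introl eq_refl)).
  assert (IH' : prodR f l <= prodR g l) by (apply IH; intros; apply H; auto).
  assert (0 <= prodR f l).
  { clear IH IH'. induction l as [|b l IH2]; simpl; [lra|].
    destruct (H b (or_intror (or_introl eq_refl))).
    apply Rmult_le_pos; [lra|]. apply IH2. intros i [->|Hi]; apply H; simpl; auto. }
  nra.
Qed.

Lemma one_minus_prod f l : (forall i, In i l -> 0 <= f i <= 1) ->
  1 - prodR (fun i => 1 - f i) l <= sumR f l.
Proof.
  induction l as [|a l IH]; simpl; intros H; [lra|].
  destruct (H a (or_introl eq_refl)).
  destruct (prodR_01 (fun i => 1 - f i) l) as [P1 P2].
  { intros i Hi. destruct (H i (or_intror Hi)). lra. }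
  assert (IH' := IH (fun i Hi => H i (or_intror Hi))). nra.
Qed.

Lemma sumR_bound f l d : (forall i, In i l -> f i <= d) -> sumR f l <= INR (length l) * d.
Proof.
  induction l as [|a l IH]; intros H; [simpl; lra|].
  change (length (a :: l)) with (S (length l)); rewrite S_INR; simpl sumR. assert (H1 := H a (or_introl eq_refl)).
  assert (IH' := IH (fun i Hi => H i (or_intror Hi))). lra.
Qed.

Lemma de_y_01 G xt j : (forall i, 0 <= xt i <= 1) -> 0 <= de_y G xt j <= 1.
Proof.
  intros H. unfold de_y.
  destruct (prodR_01 (fun i => 1 - xt i) (Ec G j)); [|lra].
  intros i _. specialize (H i). lra.
Qed.

Lemma de_y_mono G x1 x2 j : (forall i, 0 <= x1 i <= x2 i /\ x2 i <= 1) ->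
  de_y G x1 j <= de_y G x2 j.
Proof.
  intros H. unfold de_y.
  assert (prodR (fun i => 1 - x2 i) (Ec G j) <= prodR (fun i => 1 - x1 i) (Ec G j)).
  { apply prodR_le. intros i _. specialize (H i). lra. }
  lra.
Qed.

Lemma de_x_S G eps t i : de_x G eps (S t) i = eps * prodR (de_y G (de_x G eps t)) (Ev G i).
Proof. reflexivity. Qed.

Lemma x_01 G eps : 0 <= eps <= 1 -> forall t i, 0 <= de_x G eps t i <= 1.
Proof.
  intros He t. induction t as [|t IH]; intros i; [simpl; lra|].
  rewrite de_x_S.
  destruct (prodR_01 (de_y G (de_x G eps t)) (Ev G i)); [|nra].
  intros j _. apply de_y_01. exact IH.
Qed.

Lemma x_mono_eps G e1 e2 : 0 <= e1 -> e1 <= e2 -> e2 <= 1 ->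
  forall t i, de_x G e1 t i <= de_x G e2 t i.
Proof.
  intros H1 H2 H3 t. induction t as [|t IH]; intros i; [simpl; lra|].
  rewrite !de_x_S.
  assert (A : prodR (de_y G (de_x G e1 t)) (Ev G i) <= prodR (de_y G (de_x G e2 t)) (Ev G i)).
  { apply prodR_le. intros j _. split.
    - apply de_y_01. apply x_01. lra.
    - apply de_y_mono. intros k. pose proof (x_01 G e1 ltac:(lra) t k).
      pose proof (x_01 G e2 ltac:(lra) t k). specialize (IH k). lra. }
  destruct (prodR_01 (de_y G (de_x G e1 t)) (Ev G i)).
  { intros j _. apply de_y_01. apply x_01. lra. }
  nra.
Qed.

Lemma x_mono_t G eps : 0 <= eps <= 1 -> forall t i, de_x G eps (S t) i <= de_x G eps t i.
Proof.
  intros He t. induction t as [|t IH]; intros i.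
  - rewrite de_x_S. simpl.
    destruct (prodR_01 (de_y G (fun _ => eps)) (Ev G i)); [|nra].
    intros j _. apply de_y_01. intros; lra.
  - rewrite (de_x_S G eps (S t)), (de_x_S G eps t).
    apply Rmult_le_compat_l; [lra|]. apply prodR_le. intros j _. split.
    + apply de_y_01. apply x_01. lra.
    + apply de_y_mono. intros k. pose proof (x_01 G eps He (S t) k).
      pose proof (x_01 G eps He t k). specialize (IH k). lra.
Qed.

Lemma x_mono_t2 G eps : 0 <= eps <= 1 -> forall t s i, (t <= s)%nat ->
  de_x G eps s i <= de_x G eps t i.
Proof.
  intros He t s i H. induction H; [lra|].
  pose proof (x_mono_t G eps He m i). lra.
Qed.


Definition succ G i k := exists j, In j (Ev G i) /\ In k (Ec G j).
Definition chain G r i := exists w : nat -> nat, w 0%nat = i /\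
  (forall m, (m <= r)%nat -> (w m < nedges G)%nat /\ var_deg G (vof G (w m)) = 2%nat) /\
  (forall m, (m < r)%nat -> succ G (w m) (w (S m))).

Lemma chain_step G r i k : (i < nedges G)%nat -> var_deg G (vof G i) = 2%nat ->
  succ G i k -> chain G r k -> chain G (S r) i.
Proof.
  intros Hi Hd Hs [w [H0 [H1 H2]]].
  exists (fun m => match m with O => i | S m' => w m' end). split; [reflexivity|]. split.
  - intros [|m] Hm; [auto|]. apply H1. lia.
  - intros [|m] Hm; [rewrite H0; exact Hs|]. apply H2. lia.
Qed.

Lemma Ev_deg2 G i : (i < nedges G)%nat -> var_deg G (vof G i) = 2%nat ->
  Ev G i = [hd 0%nat (Ev G i)].
Proof.
  intros Hi Hd. pose proof (Ev_len G i Hi) as L. rewrite Hd in L.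
  destruct (Ev G i) as [|a [|b l]]; simpl in *; try lia. reflexivity.
Qed.

Lemma nth_map_seq {A} (f : nat -> A) k j d : (j < k)%nat -> nth j (map f (seq 0 k)) d = f j.
Proof.
  intros H. rewrite (nth_indep _ d (f 0%nat)) by (rewrite length_map, length_seq; lia).
  rewrite map_nth, seq_nth by lia. reflexivity.
Qed.

Lemma NoDup_map_seq {A} (f : nat -> A) k :
  (forall p q, (p < k)%nat -> (q < k)%nat -> f p = f q -> p = q) -> NoDup (map f (seq 0 k)).
Proof.
  intros H. destruct k as [|k]; [constructor|].
  apply (proj2 (NoDup_nth _ (f 0%nat))). rewrite length_map, length_seq.
  intros p q Hp Hq E. rewrite !nth_map_seq in E by lia. auto.
Qed.

Lemma pigeon (c : nat -> nat) K N : (forall m, (m <= N)%nat -> (c m < K)%nat) -> (K <= N)%nat ->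
  exists a b, (a < b <= N)%nat /\ c a = c b /\
    (forall p q, (p < b)%nat -> (q < b)%nat -> c p = c q -> p = q).
Proof.
  intros HK HKN.
  set (P := fun b => exists a, (a < b)%nat /\ c a = c b).
  assert (Ex : exists b, (b <= N)%nat /\ P b).
  { apply NNPP. intros Hn.
    assert (ND : NoDup (map c (seq 0 (S N)))).
    { apply NoDup_map_seq. intros p q Hp Hq E.
      destruct (Nat.lt_trichotomy p q) as [Hl|[He|Hl]]; auto; exfalso; apply Hn.
      - exists q. split; [lia|]. exists p. auto.
      - exists p. split; [lia|]. exists q. auto. }
    assert (I : incl (map c (seq 0 (S N))) (seq 0 K)).
    { intros x Hx. apply in_map_iff in Hx. destruct Hx as [m [<- Hm]].
      apply in_seq in Hm. apply in_seq. specialize (HK m). lia. }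
    pose proof (NoDup_incl_length ND I). rewrite length_map, !length_seq in *. lia. }
  assert (Min : forall B, (exists b, (b <= B)%nat /\ P b) ->
            exists b, P b /\ (b <= B)%nat /\ forall b', (b' < b)%nat -> ~ P b').
  { induction B as [|B IH]; intros [b [Hb HP]].
    - exists b. split; [auto|]. split; [lia|]. intros; lia.
    - destruct (classic (exists b, (b <= B)%nat /\ P b)) as [Hc|Hc].
      + destruct (IH Hc) as [b0 [? [? ?]]]. exists b0. split; [auto|]. split; [lia|auto].
      + exists b. split; [auto|]. split; [lia|]. intros b' Hb' HP'. apply Hc.
        exists b'. split; [lia|auto]. }
  destruct Ex as [b0 [Hb0 HP0]].
  destruct (Min N (ex_intro _ b0 (conj Hb0 HP0))) as [b [[a [Hab Hc]] [HbN Hmin]]].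
  exists a, b. split; [lia|]. split; [auto|].
  intros p q Hp Hq E.
  destruct (Nat.lt_trichotomy p q) as [Hl|[He|Hl]]; auto; exfalso.
  - apply (Hmin q Hq). exists p. auto.
  - apply (Hmin p Hp). exists q. auto.
Qed.

Lemma par q : Nat.even (2*q) = true /\ Nat.div2 (2*q) = q /\
  Nat.even (S (2*q)) = false /\ Nat.div2 (S (2*q)) = q.
Proof.
  induction q as [|q IH]; [simpl; auto|].
  replace (2 * S q)%nat with (S (S (2*q))) by lia.
  destruct IH as [A1 [A2 [A3 A4]]].
  change (Nat.even (S (S (2*q)))) with (Nat.even (2*q)).
  change (Nat.div2 (S (S (2*q)))) with (S (Nat.div2 (2*q))).
  change (Nat.even (S (S (S (2*q))))) with (Nat.even (S (2*q))).
  change (Nat.div2 (S (S (S (2*q))))) with (S (Nat.div2 (S (2*q)))).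
  rewrite A1, A2, A3, A4. auto.
Qed.


Lemma no_long_chain G : well_formed G -> ~ has_cycle_in_G2 G ->
  forall i, ~ chain G (nchk G) i.
Proof.
  intros WF NC i0 [w [_ [Hw Hs]]].
  set (N := nchk G) in *.
  set (c := fun m => cof G (w m)).
  set (J := fun m => hd 0%nat (Ev G (w m))).
  assert (HEv : forall m, (m <= N)%nat -> Ev G (w m) = [J m]).
  { intros m Hm. destruct (Hw m Hm). apply Ev_deg2; auto. }
  assert (F1 : forall m, (m <= N)%nat ->
            (J m < nedges G)%nat /\ vof G (J m) = vof G (w m) /\ J m <> w m).
  { intros m Hm. apply In_Ev. rewrite HEv by auto. left; auto. }
  assert (F2 : forall m, (m < N)%nat -> cof G (w (S m)) = cof G (J m) /\ w (S m) <> J m).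
  { intros m Hm. destruct (Hs m Hm) as [j [Hj Hk]].
    rewrite HEv in Hj by lia. destruct Hj as [<-|[]].
    apply In_Ec in Hk. tauto. }
  assert (F3 : forall m e, (m <= N)%nat -> (e < nedges G)%nat -> vof G e = vof G (w m) ->
            e = w m \/ e = J m).
  { intros m e Hm He Hv. destruct (Nat.eq_dec e (w m)) as [->|Hne]; [auto|].
    right. assert (In e (Ev G (w m))) by (apply In_Ev; auto).
    rewrite HEv in H by auto. destruct H as [<-|[]]; auto. }
  destruct (pigeon c N N) as [a [b [Hab [Hcab Hinj]]]].
  { intros m Hm. unfold c. destruct (Hw m Hm). apply WF. auto. }
  { lia. }
  assert (cJ : forall m, (m < b)%nat -> cof G (J m) = c (S m)).
  { intros m Hm. unfold c. symmetry. apply F2. lia. }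
  assert (inj2 : forall m m', (a < m <= b)%nat -> (a < m' <= b)%nat -> c m = c m' -> m = m').
  { intros m m' Hm Hm' E.
    destruct (Nat.eq_dec m b) as [->|Hmb]; destruct (Nat.eq_dec m' b) as [->|Hm'b]; auto.
    - rewrite <- Hcab in E. apply Hinj in E; lia.
    - rewrite <- Hcab in E. apply Hinj in E; lia.
    - apply Hinj; auto; lia. }
  assert (eo : forall m m', (a <= m < b)%nat -> (a <= m' < b)%nat -> w m <> J m').
  { intros m m' Hm Hm' E.
    assert (Ec1 : c m = c (S m')) by (rewrite <- cJ by lia; unfold c; rewrite E; reflexivity).
    destruct (Nat.eq_dec (S m') b) as [Hb|Hb].
    - rewrite Hb, <- Hcab in Ec1. apply Hinj in Ec1; try lia. subst m.
      assert (Hv : vof G (w m') = vof G (w a)).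
      { rewrite E. destruct (F1 m') as [_ [? _]]; [lia|]. auto. }
      destruct (F3 a (w m')) as [E2|E2]; [lia| apply Hw; lia | auto |..].
      + assert (c m' = c a) by (unfold c; rewrite E2; reflexivity).
        apply Hinj in H; try lia. subst m'. destruct (F1 a) as [_ [_ ?]]; [lia|]. congruence.
      + destruct (Nat.eq_dec m' a) as [->|Hne].
        * destruct (F1 a) as [_ [_ ?]]; [lia|]. congruence.
        * assert (c m' = c (S a)) by (rewrite <- cJ by lia; unfold c; rewrite E2; reflexivity).
          apply Hinj in H; try lia. subst m'. destruct (F2 a) as [_ ?]; [lia|]. auto.
    - apply Hinj in Ec1; try lia. subst m. destruct (F2 m') as [_ ?]; [lia|]. auto. }
  set (d := (b - a)%nat). set (k := (2 * d)%nat).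
  set (E := fun p => if Nat.even p then w (a + Nat.div2 p)%nat else J (a + Nat.div2 p)%nat).
  set (U := fun p => if Nat.even p then CN (c (a + Nat.div2 p)%nat)
                     else VN (vof G (w (a + Nat.div2 p)%nat))).
  assert (Ee : forall q, E (2*q)%nat = w (a + q)%nat /\ U (2*q)%nat = CN (c (a+q)%nat)).
  { intros q. unfold E, U. destruct (par q) as [A1 [A2 _]]. rewrite A1, A2. auto. }
  assert (Eo : forall q, E (S (2*q))%nat = J (a + q)%nat /\
                         U (S (2*q))%nat = VN (vof G (w (a+q)%nat))).
  { intros q. unfold E, U. destruct (par q) as [_ [_ [A3 A4]]]. rewrite A3, A4. auto. }
  assert (PO : forall p, (p < k)%nat -> (exists q, p = 2*q /\ q < d)%nat \/
                                        (exists q, p = S (2*q) /\ q < d)%nat).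
  { intros p Hp. destruct (Nat.Even_or_Odd p) as [[q Hq]|[q Hq]].
    - left. exists q. unfold k in Hp. lia.
    - right. exists q. unfold k in Hp. lia. }
  apply NC. exists k, (map E (seq 0 k)), (map U (seq 0 k)).
  split; [unfold k, d; lia|].
  split; [rewrite length_map, length_seq; auto|].
  split; [rewrite length_map, length_seq; auto|].
  split.
  { apply NoDup_map_seq. intros p p' Hp Hp' HE.
    destruct (PO p Hp) as [[q [-> Hq]]|[q [-> Hq]]];
    destruct (PO p' Hp') as [[q' [-> Hq']]|[q' [-> Hq']]];
    [rewrite (proj1 (Ee q)), (proj1 (Ee q')) in HE
    |rewrite (proj1 (Ee q)), (proj1 (Eo q')) in HE
    |rewrite (proj1 (Eo q)), (proj1 (Ee q')) in HE
    |rewrite (proj1 (Eo q)), (proj1 (Eo q')) in HE].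
    - assert (c (a+q)%nat = c (a+q')%nat) by (unfold c; rewrite HE; auto).
      apply Hinj in H; unfold d in *; lia.
    - exfalso. apply (eo (a+q)%nat (a+q')%nat); unfold d in *; try lia; auto.
    - exfalso. apply (eo (a+q')%nat (a+q)%nat); unfold d in *; try lia; auto.
    - assert (c (S (a+q))%nat = c (S (a+q'))%nat)
        by (rewrite <- !cJ by (unfold d in *; lia); rewrite HE; auto).
      apply inj2 in H; unfold d in *; lia. }
  split.
  { apply NoDup_map_seq. intros p p' Hp Hp' HE.
    destruct (PO p Hp) as [[q [-> Hq]]|[q [-> Hq]]];
    destruct (PO p' Hp') as [[q' [-> Hq']]|[q' [-> Hq']]];
    [rewrite (proj2 (Ee q)), (proj2 (Ee q')) in HE
    |rewrite (proj2 (Ee q)), (proj2 (Eo q')) in HE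
    |rewrite (proj2 (Eo q)), (proj2 (Ee q')) in HE
    |rewrite (proj2 (Eo q)), (proj2 (Eo q')) in HE]; try discriminate.
    - injection HE as HE. apply Hinj in HE; unfold d in *; lia.
    - injection HE as HE.
      assert (VI : forall m m', (a <= m < m')%nat -> (m' < b)%nat ->
                   vof G (w m) <> vof G (w m')).
      { intros m m' H1 H2 Hv.
        destruct (F3 m (w m')) as [E2|E2]; [lia|apply Hw; lia|auto|..].
        - assert (c m' = c m) by (unfold c; rewrite E2; auto).
          apply Hinj in H; lia.
        - apply (eo m' m); auto; lia. }
      destruct (Nat.lt_trichotomy q q') as [Hl|[He|Hl]]; [exfalso|lia|exfalso].
      + apply (VI (a+q)%nat (a+q')%nat); unfold d in *; try lia; auto.
      + apply (VI (a+q')%nat (a+q)%nat); unfold d in *; try lia; auto. }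
  intros j Hj.
  assert (Hk0 : k <> 0%nat) by (unfold k, d; lia).
  rewrite !nth_map_seq by (try apply Nat.mod_upper_bound; auto).
  destruct (PO j Hj) as [[q [-> Hq]]|[q [-> Hq]]].
  - destruct (Ee q) as [-> ->].
    rewrite Nat.mod_small by (unfold k; lia).
    replace (2 * q + 1)%nat with (S (2*q)) by lia.
    destruct (Eo q) as [_ ->].
    destruct (Hw (a+q)%nat) as [? ?]; [unfold d in *; lia|].
    split; [auto|]. split; [auto|]. right. split; reflexivity.
  - destruct (Eo q) as [-> ->].
    assert (HU : U ((S (2 * q) + 1) mod k)%nat = CN (c (S (a + q)))).
    { destruct (Nat.eq_dec (S q) d) as [Hd|Hd].
      - replace (S (2*q) + 1)%nat with k by (unfold k; lia).
        rewrite Nat.mod_same by auto. replace 0%nat with (2*0)%nat by lia.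
        rewrite (proj2 (Ee 0%nat)). rewrite Nat.add_0_r, Hcab.
        replace (S (a+q)) with b by (unfold d in *; lia). reflexivity.
      - rewrite Nat.mod_small by (unfold k; lia).
        replace (S (2*q) + 1)%nat with (2 * S q)%nat by lia.
        rewrite (proj2 (Ee (S q))). f_equal. f_equal. lia. }
    rewrite HU.
    destruct (F1 (a+q)%nat) as [HJ1 [HJ2 _]]; [unfold d in *; lia|].
    split; [auto|]. split.
    + rewrite HJ2. apply Hw. unfold d in *; lia.
    + left. split; [rewrite HJ2; reflexivity|]. rewrite cJ by (unfold d in *; lia).
      reflexivity.
Qed.


Lemma y_le G eps t j d : 0 <= eps <= 1 -> 0 <= d ->
  (forall k, In k (Ec G j) -> de_x G eps t k <= d) ->
  de_y G (de_x G eps t) j <= INR (nedges G) * d.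
Proof.
  intros He Hd H. unfold de_y.
  eapply Rle_trans; [apply one_minus_prod|].
  { intros i _. apply x_01. auto. }
  eapply Rle_trans; [apply sumR_bound; exact H|].
  apply Rmult_le_compat_r; [auto|]. apply le_INR. apply Ec_len.
Qed.

Lemma x_deg3 G eps t i d : 0 <= eps <= 1 -> 0 <= d -> (i < nedges G)%nat ->
  (3 <= var_deg G (vof G i))%nat ->
  (forall k, (k < nedges G)%nat -> de_x G eps t k <= d) ->
  de_x G eps (S t) i <= (INR (nedges G) * d) * (INR (nedges G) * d).
Proof.
  intros He Hd Hi H3 H. rewrite de_x_S.
  pose proof (Ev_len G i Hi) as L.
  assert (Y : forall j, de_y G (de_x G eps t) j <= INR (nedges G) * d).
  { intros j. apply y_le; auto. intros k Hk. apply H. apply In_Ec in Hk. tauto. }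
  assert (Y01 : forall j, 0 <= de_y G (de_x G eps t) j <= 1).
  { intros j. apply de_y_01. apply x_01. auto. }
  destruct (Ev G i) as [|a [|b l]]; simpl in L; try lia. simpl.
  destruct (prodR_01 (de_y G (de_x G eps t)) l) as [P1 P2].
  { intros; apply Y01. }
  pose proof (Y a). pose proof (Y b). pose proof (Y01 a). pose proof (Y01 b).
  set (ya := de_y G (de_x G eps t) a) in *.
  set (yb := de_y G (de_x G eps t) b) in *.
  set (P := prodR (de_y G (de_x G eps t)) l) in *.
  assert (yb * P <= yb) by nra.
  assert (0 <= yb * P) by nra.
  assert (ya * (yb * P) <= ya * yb) by nra.
  assert (ya * yb <= (INR (nedges G) * d) * (INR (nedges G) * d)) by nra.
  assert (0 <= ya * (yb * P)) by nra.
  nra.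
Qed.

Lemma x_deg2 G eps t i : 0 <= eps <= 1 -> (i < nedges G)%nat ->
  var_deg G (vof G i) = 2%nat ->
  de_x G eps (S t) i <= de_y G (de_x G eps t) (hd 0%nat (Ev G i)).
Proof.
  intros He Hi H2. rewrite de_x_S. rewrite (Ev_deg2 G i Hi H2) at 1. simpl.
  pose proof (de_y_01 G (de_x G eps t) (hd 0%nat (Ev G i)) (x_01 G eps He t)). nra.
Qed.

Lemma Qlem G eps : well_formed G ->
  (forall v, (v < nvar G)%nat -> (2 <= var_deg G v)%nat) ->
  0 <= eps <= 1 -> 1 <= INR (nedges G) ->
  forall r t d i, 0 <= d -> (forall k, (k < nedges G)%nat -> de_x G eps t k <= d) ->
    (i < nedges G)%nat -> var_deg G (vof G i) = 2%nat -> ~ chain G r i ->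
    de_x G eps (t + r + 1) i <= INR (nedges G) ^ (r + 2) * (d * d).
Proof.
  intros WF Hdeg He HA. set (A := INR (nedges G)) in *.
  induction r as [|r IH]; intros t d i Hd Ht Hi H2 Hch.
  - exfalso. apply Hch. exists (fun _ => i). split; [auto|]. split.
    + intros; auto.
    + intros; lia.
  - replace (t + S r + 1)%nat with (S (t + r + 1)) by lia.
    eapply Rle_trans; [apply x_deg2; auto|].
    replace (S r + 2)%nat with (S (r + 2)) by lia. rewrite <- tech_pow_Rmult.
    rewrite Rmult_assoc. apply y_le; auto.
    { apply Rmult_le_pos; [apply pow_le; lra|nra]. }
    intros k Hk. pose proof Hk as Hk'. apply In_Ec in Hk'. destruct Hk' as [Hkn _].
    assert (Hd2 : (2 <= var_deg G (vof G k))%nat) by (apply Hdeg, WF; auto).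
    destruct (Nat.eq_dec (var_deg G (vof G k)) 2) as [E2|E2].
    + apply IH; auto. intros Hc. apply Hch. eapply chain_step; eauto.
      exists (hd 0%nat (Ev G i)). split; [|auto].
      rewrite (Ev_deg2 G i Hi H2) at 2. left; auto.
    + eapply Rle_trans; [apply x_mono_t2 with (t := S t); auto; lia|].
      eapply Rle_trans; [apply x_deg3 with (d := d); auto; lia|].
      assert (A ^ 2 <= A ^ (r + 2)) by (apply Rle_pow; auto; lia).
      simpl in H. assert (0 <= d*d) by nra.
      change (INR (nedges G)) with A.
      replace ((A*d)*(A*d)) with ((A*(A*1))*(d*d)) by ring.
      apply Rmult_le_compat_r; auto.
Qed.


Lemma exp_le_mono x y : x <= y -> exp x <= exp y.
Proof.
  intros H. destruct (Rle_lt_or_eq_dec _ _ H) as [H1|He].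
  - left. apply exp_increasing; auto.
  - rewrite He. lra.
Qed.

Lemma main_step G eps : well_formed G ->
  (forall v, (v < nvar G)%nat -> (2 <= var_deg G v)%nat) ->
  ~ has_cycle_in_G2 G ->
  0 <= eps <= 1 -> 1 <= INR (nedges G) ->
  forall t d, 0 <= d -> (forall k, (k < nedges G)%nat -> de_x G eps t k <= d) ->
    forall i, (i < nedges G)%nat ->
      de_x G eps (t + S (nchk G)) i <= INR (nedges G) ^ (nchk G + 2) * (d * d).
Proof.
  intros WF Hdeg NC He HA t d Hd Ht i Hi.
  assert (Hd2 : (2 <= var_deg G (vof G i))%nat) by (apply Hdeg, WF; auto).
  destruct (Nat.eq_dec (var_deg G (vof G i)) 2) as [E2|E2].
  - replace (t + S (nchk G))%nat with (t + nchk G + 1)%nat by lia.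
    apply Qlem; auto. apply no_long_chain; auto.
  - eapply Rle_trans; [apply x_mono_t2 with (t := S t); auto; lia|].
    eapply Rle_trans; [apply x_deg3 with (d := d); auto; lia|].
    set (A := INR (nedges G)) in *.
    assert (A ^ 2 <= A ^ (nchk G + 2)) by (apply Rle_pow; auto; lia).
    simpl in H. assert (0 <= d*d) by nra.
    replace ((A*d)*(A*d)) with ((A*(A*1))*(d*d)) by ring.
    apply Rmult_le_compat_r; auto.
Qed.

Theorem theorem1 (G : protograph) :
  well_formed G ->
  (forall v, (v < nvar G)%nat -> (2 <= var_deg G v)%nat) ->
  ~ has_cycle_in_G2 G ->
  (forall v, (v < nvar G)%nat -> var_deg G v = 2%nat ->
     exists w, (w < nvar G)%nat /\ (3 <= var_deg G w)%nat /\ path_in_G G (VN v) (VN w)) ->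
  forall eth : R, is_threshold G eth ->
  forall eps : R, 0 <= eps < eth ->
  exists (alpha beta K : R) (t0 : nat),
    0 < alpha /\ 0 < beta /\ 0 < K /\
    forall i t, (i < nedges G)%nat -> (t0 <= t)%nat ->
      de_x G eps t i <= K * exp (- beta * Rpower 2 (alpha * INR t)).
Proof.
  intros WF Hdeg NC _ eth Hth eps Heps.
  destruct (Nat.eq_dec (nedges G) 0) as [H0|Hn].
  { exists 1, 1, 1, 0%nat. split; [lra|]. split; [lra|]. split; [lra|]. intros; lia. }
  destruct (classic (exists e, de_converges G e /\ eps < e)) as [[e' [[He'1 Hcv'] Hlt]]|Hno].
  2:{ exfalso. destruct Hth as [_ Hleast].
      assert (eth <= eps); [|lra]. apply Hleast. intros e He.
      destruct (Rle_or_lt e eps) as [?|Hl]; auto. exfalso. apply Hno. eauto. }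
  assert (He : 0 <= eps <= 1) by lra.
  set (X := de_x G eps).
  assert (Hcv : forall i, (i < nedges G)%nat -> forall dl, 0 < dl ->
            exists T, forall t, (T <= t)%nat -> X t i < dl).
  { intros i Hi dl Hdl. destruct (Hcv' i Hi dl Hdl) as [T HT]. exists T. intros t Ht.
    specialize (HT t Ht). unfold R_dist in HT. rewrite Rminus_0_r in HT.
    pose proof (Rle_abs (de_x G e' t i)).
    pose proof (x_mono_eps G eps e' (proj1 He) (Rlt_le _ _ Hlt) (proj2 He'1) t i).
    unfold X. lra. }
  set (A := INR (nedges G)).
  assert (HA : 1 <= A) by (unfold A; replace 1 with (INR 1) by reflexivity; apply le_INR; lia).
  set (N := nchk G). set (L := S N).
  set (B := A ^ (N + 2)).
  assert (HB : 1 <= B) by (apply pow_R1_Rle; auto).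
  set (d0 := / (2 * B)).
  assert (Hd0 : 0 < d0) by (unfold d0; apply Rinv_0_lt_compat; lra).
  assert (HT : forall m, (m <= nedges G)%nat -> exists T, forall k, (k < m)%nat -> X T k <= d0).
  { induction m as [|m IH]; intros Hm.
    - exists 0%nat. intros; lia.
    - destruct IH as [T1 HT1]; [lia|].
      destruct (Hcv m ltac:(lia) d0 Hd0) as [T2 HT2].
      exists (Nat.max T1 T2). intros k Hk.
      destruct (Nat.eq_dec k m) as [->|Hne].
      + left. apply HT2. lia.
      + eapply Rle_trans; [apply x_mono_t2 with (t := T1); auto; lia|]. apply HT1. lia. }
  destruct (HT (nedges G) (le_n _)) as [t1 Ht1].
  assert (Hln : 0 < ln 2).
  { rewrite <- ln_1. apply ln_increasing; lra. }
  assert (Iter : forall m k, (k < nedges G)%nat ->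
            X (t1 + m * L)%nat k <= / B * exp (- (ln 2 * 2 ^ m))).
  { induction m as [|m IH]; intros k Hk.
    - rewrite Nat.mul_0_l, Nat.add_0_r. simpl pow. rewrite Rmult_1_r, exp_Ropp, exp_ln by lra.
      eapply Rle_trans; [apply Ht1; auto|]. unfold d0. rewrite Rinv_mult. lra.
    - replace (t1 + S m * L)%nat with ((t1 + m * L) + S N)%nat by (unfold L; lia).
      eapply Rle_trans; [apply main_step; auto|].
      { apply Rmult_le_pos; [left; apply Rinv_0_lt_compat; lra|]. left; apply exp_pos. }
      fold N A B.
      replace (exp (- (ln 2 * 2 ^ S m))) with
        (exp (- (ln 2 * 2 ^ m)) * exp (- (ln 2 * 2 ^ m))).
      + right. field. lra.
      + rewrite <- exp_plus. f_equal. simpl pow. ring. }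
  exists (/ INR L), (ln 2 * exp (- (INR t1 * / INR L + 1) * ln 2)), (/ B), t1.
  assert (HL : 0 < INR L) by (apply lt_0_INR; unfold L; lia).
  split; [apply Rinv_0_lt_compat; auto|].
  split; [apply Rmult_lt_0_compat; auto; apply exp_pos|].
  split; [apply Rinv_0_lt_compat; lra|].
  intros i t Hi Ht.
  set (m := ((t - t1) / L)%nat).
  assert (Hm1 : (L * m <= t - t1)%nat) by (apply Nat.Div0.mul_div_le).
  assert (Hm2 : (t - t1 < L * S m)%nat) by (apply Nat.mul_succ_div_gt; unfold L; lia).
  fold X.
  eapply Rle_trans; [apply x_mono_t2 with (t := (t1 + m * L)%nat); auto; lia|].
  eapply Rle_trans; [apply Iter; auto|].
  apply Rmult_le_compat_l; [left; apply Rinv_0_lt_compat; lra|].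
  apply exp_le_mono.
  assert (Hr : INR t - INR t1 - INR L <= INR m * INR L).
  { assert (t < t1 + L * S m)%nat by lia.
    apply lt_INR in H. rewrite plus_INR, mult_INR, S_INR in H. lra. }
  assert (Hr2 : INR t * / INR L - INR t1 * / INR L - 1 <= INR m).
  { replace (INR t * / INR L - INR t1 * / INR L - 1)
      with ((INR t - INR t1 - INR L) * / INR L) by (field; lra).
    apply (Rmult_le_reg_r (INR L)); auto.
    replace ((INR t - INR t1 - INR L) * / INR L * INR L) with (INR t - INR t1 - INR L)
      by (field; lra). lra. }
  rewrite <- (Rpower_pow m 2) by lra. unfold Rpower.
  assert (exp (- (INR t1 * / INR L + 1) * ln 2) * exp (/ INR L * INR t * ln 2)
          <= exp (INR m * ln 2)).
  { rewrite <- exp_plus. apply exp_le_mono. nra. }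
  nra.
Qed.
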